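(* Let $(N,J,h)$ be a 2-dimensional almost Norden manifold and let $(\mathcal{C}(N),\varphi,\xi,\eta,g)$ be the cone over it (constructed as in the context). Then $(\mathcal{C}(N),\varphi,\xi,\eta,g)$ (1) belongs to the class $\mathcal{F}_1\oplus\mathcal{F}_5$; (2) belongs to $\mathcal{F}_5$ if and only if $(N,J,h)$ is a $\mathcal{W}_0$-manifold (i.e. a K\''ahler-Norden manifold, $\nabla'J=0$); (3) cannot belong to $\mathcal{F}_1$.
   Context: An almost Norden manifold $(N,J,h)$ is a manifold $N$ with an almost complex structure $J$ and a pseudo-Riemannian metric $h$ satisfying $h(Jx,Jy)=-h(x,y)$; $\nabla'$ is its Levi-Civita connection, and $\mathcal{W}_0$ is the class of K\''ahler-Norden manifolds, defined by $\nabla'J=0$. The cone is $\mathcal{C}(N)=\mathbb{R}^+\times N$, $t$ the coordinate on $\mathbb{R}^+=(0,\infty)$, with metric $g=t^2h+\mathrm{d}t^2$ and structure $\xi=\tfrac{\mathrm{d}}{\mathrm{d}t}$, $\eta=\mathrm{d}t$, $\varphi=J$ on vectors tangent to $N$, $\varphi\xi=0$; it is a 3-dimensional almost contact B-metric manifold ($\varphi\xi=0$, $\varphi^2=-\mathrm{Id}+\eta\otimes\xi$, $\eta\circ\varphi=0$, $\eta(\xi)=1$, $g(\varphi x,\varphi y)=-g(x,y)+\eta(x)\eta(y)$). Let $\nabla$ be the Levi-Civita connection of $g$ and $F(x,y,z)=g((\nabla_x\varphi)y,z)$. The Lee forms are $\theta(z)=g^{ij}F(e_i,e_j,z)$ and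 $\theta^*(z)=g^{ij}F(e_i,\varphi e_j,z)$ for a basis $\{e_i\}$. For a $(2n+1)$-dimensional almost contact B-metric manifold (here $n=1$), the Ganchev-Mihova-Gribachev classes used are: $\mathcal{F}_1$: $F(x,y,z)=\frac{1}{2n}\{g(x,\varphi y)\theta(\varphi z)+g(x,\varphi z)\theta(\varphi y)+g(\varphi x,\varphi y)\theta(\varphi^2z)+g(\varphi x,\varphi z)\theta(\varphi^2y)\}$; $\mathcal{F}_5$: $F(x,y,z)=-\frac{\theta^*(\xi)}{2n}\{g(x,\varphi y)\eta(z)+g(x,\varphi z)\eta(y)\}$. The manifold belongs to $\mathcal{F}_1\oplus\mathcal{F}_5$ if $F$ equals the sum of the right-hand sides of these two expressions. *)

(* Defs.v *)
From Stdlib Require Import Reals Lra.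
From Coquelicot Require Import Coquelicot.
Open Scope R_scope.

Fixpoint sumn (n : nat) (f : nat -> R) : R :=
  match n with O => 0 | S m => sumn m f + f m end.

Definition upd (p : nat -> R) (i : nat) (s : R) : nat -> R :=
  fun k => if Nat.eqb k i then s else p k.

Definition pd (i : nat) (f : (nat -> R) -> R) (p : nat -> R) : R :=
  Derive (fun s => f (upd p i s)) (p i).

Definition delta (i j : nat) : R := if Nat.eqb i j then 1 else 0.

(* a (0,2) or (1,1) tensor field in coordinates: component i j at point p *)
Definition field := nat -> nat -> (nat -> R) -> R.

Definition det2 (m : field) p := m 0%nat 0%nat p * m 1%nat 1%nat p - m 0%nat 1%nat p * m 1%nat 0%nat p.
Definition inv2 (m : field) : field := fun i j p =>
  match i, j with
  | 0%nat, 0%nat => m 1%nat 1%nat p / det2 m p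
  | 0%nat, 1%nat => - m 0%nat 1%nat p / det2 m p
  | 1%nat, 0%nat => - m 1%nat 0%nat p / det2 m p
  | _, _ => m 0%nat 0%nat p / det2 m p
  end.

(* inverse of a 3x3 matrix field (adjugate / determinant, cyclic cofactors) *)
Definition m3 (k : nat) : nat := Nat.modulo k 3.
Definition cof3 (m : field) (i j : nat) p :=
  m (m3 (i+1)) (m3 (j+1)) p * m (m3 (i+2)) (m3 (j+2)) p
  - m (m3 (i+1)) (m3 (j+2)) p * m (m3 (i+2)) (m3 (j+1)) p.
Definition det3 (m : field) p := sumn 3 (fun j => m 0%nat j p * cof3 m 0%nat j p).
Definition inv3 (m : field) : field := fun i j p => cof3 m j i p / det3 m p.

Definition christoffel (n : nat) (g ginv : field) (k i j : nat) p : R :=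
  / 2 * sumn n (fun l => ginv k l p *
     (pd i (g j l) p + pd j (g i l) p - pd l (g i j) p)).

(* components of the covariant derivative of a (1,1)-tensor A:
   (nabla_{d_i} A)(d_j) = sum_k covD n g ginv A i k j . d_k *)
Definition covD (n : nat) (g ginv A : field) (i k j : nat) p : R :=
  pd i (A k j) p
  + sumn n (fun m => christoffel n g ginv k i m p * A m j p)
  - sumn n (fun m => A k m p * christoffel n g ginv m i j p).

(* N is given by a chart domain U (open in R^2), metric components
   h a b (u1,u2) and components J a b (u1,u2) with J(d_b) = sum_a J a b d_a,
   for a b in {0,1}. *)

Definition open2 (U : R -> R -> Prop) : Prop :=
  forall u1 u2, U u1 u2 -> exists eps, 0 < eps /\
    forall v1 v2, Rabs (v1 - u1) < eps -> Rabs (v2 - u2) < eps -> U v1 v2.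

Definition hN (h : nat -> nat -> R -> R -> R) : field :=
  fun a b p => h a b (p 0%nat) (p 1%nat).

Definition almost_norden2 (U : R -> R -> Prop) (h J : nat -> nat -> R -> R -> R) : Prop :=
  forall u1 u2, U u1 u2 ->
    (forall a b, (a < 2)%nat -> (b < 2)%nat ->
       ex_derive (fun s => h a b s u2) u1 /\ ex_derive (fun s => h a b u1 s) u2 /\
       ex_derive (fun s => J a b s u2) u1 /\ ex_derive (fun s => J a b u1 s) u2) /\
    (forall a b, (a < 2)%nat -> (b < 2)%nat -> h a b u1 u2 = h b a u1 u2) /\
    h 0%nat 0%nat u1 u2 * h 1%nat 1%nat u1 u2 - h 0%nat 1%nat u1 u2 * h 1%nat 0%nat u1 u2 <> 0 /\
    (forall a b, (a < 2)%nat -> (b < 2)%nat ->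
       sumn 2 (fun c => J a c u1 u2 * J c b u1 u2) = - delta a b) /\
    (forall a b, (a < 2)%nat -> (b < 2)%nat ->
       sumn 2 (fun c => sumn 2 (fun d => h c d u1 u2 * J c a u1 u2 * J d b u1 u2))
       = - h a b u1 u2).

Definition kahler_norden (U : R -> R -> Prop) (h J : nat -> nat -> R -> R -> R) : Prop :=
  forall p : nat -> R, U (p 0%nat) (p 1%nat) ->
    forall i k j, (i < 2)%nat -> (k < 2)%nat -> (j < 2)%nat ->
      covD 2 (hN h) (inv2 (hN h)) (hN J) i k j p = 0.

(* ---------- The cone C(N) = R^+ x N, coordinates (t, u1, u2) = (p0, p1, p2) ---------- *)

Definition gC (h : nat -> nat -> R -> R -> R) : field := fun i j p =>
  match i, j with
  | 0%nat, 0%nat => 1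
  | 0%nat, _ => 0
  | _, 0%nat => 0
  | S a, S b => (p 0%nat) ^ 2 * h a b (p 1%nat) (p 2%nat)
  end.

Definition phiC (J : nat -> nat -> R -> R -> R) : field := fun i j p =>
  match i, j with
  | 0%nat, _ => 0
  | _, 0%nat => 0
  | S a, S b => J a b (p 1%nat) (p 2%nat)
  end.

Section Cone.
Variables (h J : nat -> nat -> R -> R -> R).

Definition g3 := gC h.
Definition g3inv := inv3 (gC h).
Definition phi3 := phiC J.

Definition gv (x y : nat -> R) p := sumn 3 (fun i => sumn 3 (fun j => g3 i j p * x i * y j)).
Definition phiv (x : nat -> R) p : nat -> R := fun k => sumn 3 (fun j => phi3 k j p * x j).
Definition eta (x : nat -> R) : R := x 0%nat.
Definition basis (i : nat) : nat -> R := fun k => delta k i.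
Definition xi : nat -> R := basis 0.

(* F(x,y,z) = g((nabla_x phi) y, z) *)
Definition Fc (x y z : nat -> R) p : R :=
  sumn 3 (fun i => sumn 3 (fun j => sumn 3 (fun k => sumn 3 (fun l =>
    x i * y j * z l * g3 k l p * covD 3 g3 g3inv phi3 i k j p)))).

Definition theta (z : nat -> R) p : R :=
  sumn 3 (fun i => sumn 3 (fun j => g3inv i j p * Fc (basis i) (basis j) z p)).
Definition theta_s (z : nat -> R) p : R :=
  sumn 3 (fun i => sumn 3 (fun j => g3inv i j p * Fc (basis i) (phiv (basis j) p) z p)).

(* right-hand sides of the class conditions, with n = 1 (dim 2n+1 = 3) *)
Definition F1rhs (x y z : nat -> R) p : R :=
  / 2 * ( gv x (phiv y p) p * theta (phiv z p) p
        + gv x (phiv z p) p * theta (phiv y p) p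
        + gv (phiv x p) (phiv y p) p * theta (phiv (phiv z p) p) p
        + gv (phiv x p) (phiv z p) p * theta (phiv (phiv y p) p) p).
Definition F5rhs (x y z : nat -> R) p : R :=
  - (theta_s xi p / 2) * (gv x (phiv y p) p * eta z + gv x (phiv z p) p * eta y).

End Cone.

Definition cone_point (U : R -> R -> Prop) (p : nat -> R) : Prop :=
  0 < p 0%nat /\ U (p 1%nat) (p 2%nat).

Definition cone_in_F1 U h J : Prop :=
  forall p, cone_point U p -> forall x y z, Fc h J x y z p = F1rhs h J x y z p.
Definition cone_in_F5 U h J : Prop :=
  forall p, cone_point U p -> forall x y z, Fc h J x y z p = F5rhs h J x y z p.
Definition cone_in_F1F5 U h J : Prop :=
  forall p, cone_point U p -> forall x y z,
    Fc h J x y z p = F1rhs h J x y z p + F5rhs h J x y z p.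

(* Main.v *)
Require Import Defs.
From Stdlib Require Import Reals Lra Field Lia.
From Coquelicot Require Import Coquelicot.
Open Scope R_scope.

Section Alg.
Variables (H Jm : nat -> nat -> R) (dH dJ : nat -> nat -> nat -> R).
Definition dtH := H 0%nat 0%nat * H 1%nat 1%nat - H 0%nat 1%nat * H 1%nat 0%nat.
Definition Hi (i j : nat) : R := match i, j with
  | 0%nat, 0%nat => H 1%nat 1%nat / dtH
  | 0%nat, 1%nat => - H 0%nat 1%nat / dtH
  | 1%nat, 0%nat => - H 1%nat 0%nat / dtH
  | _, _ => H 0%nat 0%nat / dtH end.
Definition Gam k i j := / 2 * sumn 2 (fun l => Hi k l * (dH i j l + dH j i l - dH l i j)).
Definition cov i k j := dJ i k j + sumn 2 (fun m => Gam k i m * Jm m j)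
   - sumn 2 (fun m => Jm k m * Gam m i j).
Definition Ac a b d := sumn 2 (fun k => H k d * cov a k b).
Definition Pm (b d : nat) : R := match b, d with
  | 0%nat, 0%nat => Jm 1%nat 0%nat
  | 1%nat, 1%nat => - Jm 0%nat 1%nat
  | _, _ => - Jm 0%nat 0%nat end.

Definition Rel : Prop :=
  Jm 0%nat 0%nat * Jm 0%nat 0%nat + Jm 0%nat 1%nat * Jm 1%nat 0%nat = -1 /\
  Jm 1%nat 1%nat = - Jm 0%nat 0%nat /\
  H 1%nat 0%nat = H 0%nat 1%nat /\
  H 0%nat 0%nat * Jm 0%nat 1%nat + H 0%nat 1%nat * Jm 1%nat 1%nat
    = H 1%nat 0%nat * Jm 0%nat 0%nat + H 1%nat 1%nat * Jm 1%nat 0%nat /\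
  dtH <> 0 /\
  forall k, (k < 2)%nat ->
   dJ k 1%nat 1%nat = - dJ k 0%nat 0%nat /\
   2 * Jm 0%nat 0%nat * dJ k 0%nat 0%nat + dJ k 0%nat 1%nat * Jm 1%nat 0%nat
     + Jm 0%nat 1%nat * dJ k 1%nat 0%nat = 0 /\
   dH k 1%nat 0%nat = dH k 0%nat 1%nat /\
   dH k 0%nat 0%nat * Jm 0%nat 1%nat + H 0%nat 0%nat * dJ k 0%nat 1%nat
   + dH k 0%nat 1%nat * Jm 1%nat 1%nat + H 0%nat 1%nat * dJ k 1%nat 1%nat
   - dH k 1%nat 0%nat * Jm 0%nat 0%nat - H 1%nat 0%nat * dJ k 0%nat 0%nat
   - dH k 1%nat 1%nat * Jm 1%nat 0%nat - H 1%nat 1%nat * dJ k 1%nat 0%nat = 0.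

Lemma Ac_struct : Rel -> forall a b d, (a < 2)%nat -> (b < 2)%nat -> (d < 2)%nat ->
  Ac a b d * Jm 1%nat 0%nat = Ac a 0%nat 0%nat * Pm b d.
Proof.
intros [r1 [r2 [r3 [r4 [r5 rd]]]]].
assert (J01nz : Jm 0%nat 1%nat <> 0).
{ intro E. rewrite E in r1. nra. }
destruct (rd 0%nat ltac:(lia)) as [d10 [d20 [d30 d40]]].
destruct (rd 1%nat ltac:(lia)) as [d11 [d21 [d31 d41]]].
clear rd.
assert (eJ10 : Jm 1%nat 0%nat = -(1 + Jm 0%nat 0%nat * Jm 0%nat 0%nat) / Jm 0%nat 1%nat).
{ apply (Rmult_eq_reg_r (Jm 0%nat 1%nat)); [| auto]. unfold Rdiv.
  rewrite Rmult_assoc, Rinv_l; [nra | auto]. }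
rewrite r2, r3 in r4. rewrite r2, r3 in d40. rewrite r2, r3 in d41.
rewrite d30, d10 in d40. rewrite d31, d11 in d41.
assert (eH00 : H 0%nat 0%nat = (2 * Jm 0%nat 0%nat * H 0%nat 1%nat + H 1%nat 1%nat * Jm 1%nat 0%nat) / Jm 0%nat 1%nat).
{ apply (Rmult_eq_reg_r (Jm 0%nat 1%nat)); [| auto]. unfold Rdiv.
  rewrite Rmult_assoc, Rinv_l; [nra | auto]. }
assert (edJ0 : dJ 0%nat 1%nat 0%nat = -(2 * Jm 0%nat 0%nat * dJ 0%nat 0%nat 0%nat + dJ 0%nat 0%nat 1%nat * Jm 1%nat 0%nat) / Jm 0%nat 1%nat).
{ apply (Rmult_eq_reg_r (Jm 0%nat 1%nat)); [| auto]. unfold Rdiv.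
  rewrite Rmult_assoc, Rinv_l; [nra | auto]. }
assert (edJ1 : dJ 1%nat 1%nat 0%nat = -(2 * Jm 0%nat 0%nat * dJ 1%nat 0%nat 0%nat + dJ 1%nat 0%nat 1%nat * Jm 1%nat 0%nat) / Jm 0%nat 1%nat).
{ apply (Rmult_eq_reg_r (Jm 0%nat 1%nat)); [| auto]. unfold Rdiv.
  rewrite Rmult_assoc, Rinv_l; [nra | auto]. }
assert (edH0 : dH 0%nat 0%nat 0%nat = (2 * dH 0%nat 0%nat 1%nat * Jm 0%nat 0%nat + 2 * H 0%nat 1%nat * dJ 0%nat 0%nat 0%nat + dH 0%nat 1%nat 1%nat * Jm 1%nat 0%nat + H 1%nat 1%nat * dJ 0%nat 1%nat 0%nat - H 0%nat 0%nat * dJ 0%nat 0%nat 1%nat) / Jm 0%nat 1%nat).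
{ apply (Rmult_eq_reg_r (Jm 0%nat 1%nat)); [| auto]. unfold Rdiv.
  rewrite Rmult_assoc, Rinv_l; [nra | auto]. }
assert (edH1 : dH 1%nat 0%nat 0%nat = (2 * dH 1%nat 0%nat 1%nat * Jm 0%nat 0%nat + 2 * H 0%nat 1%nat * dJ 1%nat 0%nat 0%nat + dH 1%nat 1%nat 1%nat * Jm 1%nat 0%nat + H 1%nat 1%nat * dJ 1%nat 1%nat 0%nat - H 0%nat 0%nat * dJ 1%nat 0%nat 1%nat) / Jm 0%nat 1%nat).
{ apply (Rmult_eq_reg_r (Jm 0%nat 1%nat)); [| auto]. unfold Rdiv.
  rewrite Rmult_assoc, Rinv_l; [nra | auto]. }
unfold dtH in r5. rewrite r3 in r5.
assert (r5' : (2 * Jm 0%nat 0%nat * H 0%nat 1%nat * Jm 0%nat 1%nat + H 1%nat 1%nat * - (1 + Jm 0%nat 0%nat * Jm 0%nat 0%nat)) * H 1%nat 1%nat -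
  H 0%nat 1%nat * H 0%nat 1%nat * (Jm 0%nat 1%nat * Jm 0%nat 1%nat) <> 0).
{ intro Z; apply r5. rewrite eH00, eJ10.
  replace 0 with (0 / (Jm 0%nat 1%nat * Jm 0%nat 1%nat)) by (field; auto).
  rewrite <- Z. field. auto. }
intros a b d Ha Hb Hd.
assert (Hab : forall n, (n < 2)%nat -> n = 0%nat \/ n = 1%nat) by (intros; lia).
destruct (Hab a Ha); destruct (Hab b Hb); destruct (Hab d Hd); subst a b d.
all: try reflexivity.
all: cbv beta iota delta [Ac cov Gam Hi dtH Pm sumn];
  rewrite ?d10, ?d11, ?d30, ?d31, ?r2, ?r3;
  rewrite ?edH0, ?edH1; rewrite ?edJ0, ?edJ1; rewrite ?eH00; rewrite ?eJ10;
  field; split; [auto | exact r5'].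
Qed.

End Alg.

Section Cone2.
Variables (h J : nat -> nat -> R -> R -> R).
Definition Hf (p : nat -> R) a b := h a b (p 1%nat) (p 2%nat).
Definition Jf (p : nat -> R) a b := J a b (p 1%nat) (p 2%nat).
Definition dHf (p : nat -> R) k a b := match k with
  | 0%nat => Derive (fun s => h a b s (p 2%nat)) (p 1%nat)
  | _ => Derive (fun s => h a b (p 1%nat) s) (p 2%nat) end.
Definition dJf (p : nat -> R) k a b := match k with
  | 0%nat => Derive (fun s => J a b s (p 2%nat)) (p 1%nat)
  | _ => Derive (fun s => J a b (p 1%nat) s) (p 2%nat) end.

Lemma D_sq c x : Derive (fun s => s ^ 2 * c) x = 2 * x * c.
Proof. apply is_derive_unique. auto_derive; [auto | ring]. Qed.

Definition dG p i j l := match j, l with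
  | S a, S b => match i with 0%nat => 2 * p 0%nat * Hf p a b | S k => (p 0%nat)^2 * dHf p k a b end
  | _, _ => 0 end.

Ltac cases3 i := let H := fresh in assert (H : (i = 0 \/ i = 1 \/ i = 2)%nat) by lia;
  destruct H as [H|[H|H]]; subst i.

Lemma pd_gC p i j l : (i < 3)%nat -> (j < 3)%nat -> (l < 3)%nat ->
  pd i (gC h j l) p = dG p i j l.
Proof.
intros Hi Hj Hl. cases3 i; cases3 j; cases3 l;
unfold pd; cbn [gC upd Nat.eqb dG Hf dHf];
first [ apply Derive_const | apply D_sq | apply Derive_scal ].
Qed.

Definition dP p i k j := match k, j with
  | S c, S b => match i with 0%nat => 0 | S m => dJf p m c b end
  | _, _ => 0 end.

Lemma pd_phiC p i k j : (i < 3)%nat -> (k < 3)%nat -> (j < 3)%nat ->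
  pd i (phiC J k j) p = dP p i k j.
Proof.
intros Hi Hj Hl. cases3 i; cases3 k; cases3 j;
unfold pd; cbn [phiC upd Nat.eqb dP dJf];
first [ apply Derive_const | reflexivity ].
Qed.

Definition GI p i j := match i, j with
  | 0%nat, 0%nat => 1
  | S a, S b => Hi (Hf p) a b / (p 0%nat)^2
  | _, _ => 0 end.

Lemma inv3_gC p i j : (i < 3)%nat -> (j < 3)%nat -> p 0%nat <> 0 -> dtH (Hf p) <> 0 ->
  inv3 (gC h) i j p = GI p i j.
Proof.
intros Hi0 Hj Hp Hd. unfold dtH, Hf in Hd.
cases3 i; cases3 j; unfold inv3, det3; unfold cof3, m3; simpl; cbv beta iota delta [GI Hi dtH Hf gC sumn];
field; repeat split; auto.
all: intro Z; apply Hd; apply (Rmult_eq_reg_l (p 0%nat * p 0%nat * (p 0%nat * p 0%nat))).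
all: try (rewrite Rmult_0_r; rewrite <- Z; ring).
all: repeat apply Rmult_integral_contrapositive_currified; auto.
Qed.


Definition CovC p i k j := match i, k, j with
  | S a, 0%nat, S b => - p 0%nat * sumn 2 (fun c => Hf p a c * Jf p c b)
  | S a, S c, 0%nat => - Jf p c a / p 0%nat
  | S a, S c, S b => cov (Hf p) (Jf p) (dHf p) (dJf p) a c b
  | _, _, _ => 0 end.

Lemma covD_cone p i k j : (i < 3)%nat -> (k < 3)%nat -> (j < 3)%nat ->
  p 0%nat <> 0 -> dtH (Hf p) <> 0 -> Hf p 1%nat 0%nat = Hf p 0%nat 1%nat ->
  covD 3 (gC h) (inv3 (gC h)) (phiC J) i k j p = CovC p i k j.
Proof.
intros Hi0 Hk Hj Hp Hd Hs.
unfold covD, christoffel. cbn [sumn].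
rewrite !pd_gC by lia. rewrite !pd_phiC by lia. rewrite !inv3_gC by (auto; lia).
unfold dtH, Hf in Hd. unfold Hf in Hs.
cases3 i; cases3 k; cases3 j;
cbv beta iota delta [dG dP GI CovC phiC cov Gam Hi dtH sumn Hf Jf];
rewrite ?Hs; rewrite ?Hs in Hd; field; repeat split; auto.
Qed.
End Cone2.

Definition PW (hh jj : nat -> nat -> R) : Prop :=
  jj 0%nat 0%nat * jj 0%nat 0%nat + jj 0%nat 1%nat * jj 1%nat 0%nat + 1 = 0 /\
  jj 0%nat 0%nat + jj 1%nat 1%nat = 0 /\
  hh 0%nat 1%nat - hh 1%nat 0%nat = 0 /\
  hh 0%nat 0%nat * jj 0%nat 1%nat + hh 0%nat 1%nat * jj 1%nat 1%nat
    - hh 1%nat 0%nat * jj 0%nat 0%nat - hh 1%nat 1%nat * jj 1%nat 0%nat = 0 /\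
  dtH hh <> 0.

Lemma pointwise U h J u1 u2 : almost_norden2 U h J -> U u1 u2 ->
  PW (fun a b => h a b u1 u2) (fun a b => J a b u1 u2).
Proof.
intros AN Hu. destruct (AN u1 u2 Hu) as [_ [Hsym [Hdet [Hsq Hnor]]]].
assert (s01 := Hsym 0%nat 1%nat ltac:(lia) ltac:(lia)).
assert (q00 := Hsq 0%nat 0%nat ltac:(lia) ltac:(lia)).
assert (q01 := Hsq 0%nat 1%nat ltac:(lia) ltac:(lia)).
assert (q10 := Hsq 1%nat 0%nat ltac:(lia) ltac:(lia)).
assert (n00 := Hnor 0%nat 0%nat ltac:(lia) ltac:(lia)).
unfold PW, dtH; cbv beta.
simpl in q00, q01, q10, n00. unfold delta in q00, q01, q10; simpl in q00, q01, q10.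
set (a := J 0%nat 0%nat u1 u2) in *. set (b := J 0%nat 1%nat u1 u2) in *.
set (c := J 1%nat 0%nat u1 u2) in *. set (d := J 1%nat 1%nat u1 u2) in *.
set (h00 := h 0%nat 0%nat u1 u2) in *. set (h01 := h 0%nat 1%nat u1 u2) in *.
set (h10 := h 1%nat 0%nat u1 u2) in *. set (h11 := h 1%nat 1%nat u1 u2) in *.
assert (bnz : b <> 0) by (intro E; rewrite E in q00; nra).
assert (tr : a + d = 0).
{ apply (Rmult_eq_reg_l b); [|auto]. rewrite Rmult_0_r. lra. }
assert (cnz : c <> 0) by (intro E; rewrite E in q00; nra).
assert (ed : d = - a) by lra.
assert (eh : h10 = h01) by (symmetry; exact s01).
repeat split; try lra.
- rewrite ed, eh.
  apply (Rmult_eq_reg_l c); [|auto].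
  rewrite ?ed, ?eh in n00.
  assert (E1 : h00 * (a*a + b*c + 1) = 0) by (replace (a*a+b*c+1) with 0 by lra; ring).
  lra.
Qed.

Ltac etafix := repeat match goal with |- context [Derive (fun y => ?f y) ?x] =>
  change (Derive (fun y => f y) x) with (Derive f x) end.

Lemma loc_zero f x l : locally x (fun s => f s = 0) -> is_derive f x l -> l = 0.
Proof.
intros Hl Hd.
assert (H0 : is_derive f x 0).
{ apply is_derive_ext_loc with (fun _ => 0).
  - eapply filter_imp; [|exact Hl]. intros s E; simpl; auto.
  - auto_derive; try (repeat split; auto); try (etafix; ring). }
apply is_derive_unique in Hd. apply is_derive_unique in H0. congruence.
Qed.

Lemma drel (hh jj : nat -> nat -> R -> R) x :
  locally x (fun s => PW (fun a b => hh a b s) (fun a b => jj a b s)) ->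
  (forall a b, (a<2)%nat -> (b<2)%nat -> ex_derive (hh a b) x /\ ex_derive (jj a b) x) ->
  Derive (jj 1%nat 1%nat) x = - Derive (jj 0%nat 0%nat) x /\
  2 * jj 0%nat 0%nat x * Derive (jj 0%nat 0%nat) x + Derive (jj 0%nat 1%nat) x * jj 1%nat 0%nat x
     + jj 0%nat 1%nat x * Derive (jj 1%nat 0%nat) x = 0 /\
  Derive (hh 1%nat 0%nat) x = Derive (hh 0%nat 1%nat) x /\
  Derive (hh 0%nat 0%nat) x * jj 0%nat 1%nat x + hh 0%nat 0%nat x * Derive (jj 0%nat 1%nat) x
   + Derive (hh 0%nat 1%nat) x * jj 1%nat 1%nat x + hh 0%nat 1%nat x * Derive (jj 1%nat 1%nat) x
   - Derive (hh 1%nat 0%nat) x * jj 0%nat 0%nat x - hh 1%nat 0%nat x * Derive (jj 0%nat 0%nat) x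
   - Derive (hh 1%nat 1%nat) x * jj 1%nat 0%nat x - hh 1%nat 1%nat x * Derive (jj 1%nat 0%nat) x = 0.
Proof.
intros Hloc Hex.
destruct (Hex 0%nat 0%nat ltac:(lia) ltac:(lia)) as [eh00 ej00].
destruct (Hex 0%nat 1%nat ltac:(lia) ltac:(lia)) as [eh01 ej01].
destruct (Hex 1%nat 0%nat ltac:(lia) ltac:(lia)) as [eh10 ej10].
destruct (Hex 1%nat 1%nat ltac:(lia) ltac:(lia)) as [eh11 ej11].
split; [|split; [|split]].
- assert (E : Derive (jj 0%nat 0%nat) x + Derive (jj 1%nat 1%nat) x = 0).
  { apply (loc_zero (fun s => jj 0%nat 0%nat s + jj 1%nat 1%nat s) x).
    - eapply filter_imp; [|exact Hloc]. intros s P; unfold PW in P; cbv beta in P; tauto.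
    - auto_derive; try (repeat split; auto); try (etafix; ring). }
  lra.
- apply (loc_zero (fun s => jj 0%nat 0%nat s * jj 0%nat 0%nat s + jj 0%nat 1%nat s * jj 1%nat 0%nat s + 1) x).
  + eapply filter_imp; [|exact Hloc]. intros s P; unfold PW in P; cbv beta in P; tauto.
  + auto_derive; try (repeat split; auto); try (etafix; ring).
- assert (E : Derive (hh 0%nat 1%nat) x - Derive (hh 1%nat 0%nat) x = 0).
  { apply (loc_zero (fun s => hh 0%nat 1%nat s - hh 1%nat 0%nat s) x).
    - eapply filter_imp; [|exact Hloc]. intros s P; unfold PW in P; cbv beta in P; tauto.
    - auto_derive; try (repeat split; auto); try (etafix; ring). }
  lra.
- apply (loc_zero (fun s => hh 0%nat 0%nat s * jj 0%nat 1%nat s + hh 0%nat 1%nat s * jj 1%nat 1%nat s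
    - hh 1%nat 0%nat s * jj 0%nat 0%nat s - hh 1%nat 1%nat s * jj 1%nat 0%nat s) x).
  + eapply filter_imp; [|exact Hloc]. intros s P; unfold PW in P; cbv beta in P; tauto.
  + auto_derive; try (repeat split; auto); try (etafix; ring).
Qed.

Lemma loc_of_open U u1 u2 : open2 U -> U u1 u2 ->
  locally u1 (fun s => U s u2) /\ locally u2 (fun s => U u1 s).
Proof.
intros HO Hu. destruct (HO u1 u2 Hu) as [eps [He HU]].
split; exists (mkposreal eps He); intros y By; simpl in *.
- apply HU; [exact By|]. rewrite Rminus_eq_0, Rabs_R0; auto.
- apply HU; [|exact By]. rewrite Rminus_eq_0, Rabs_R0; auto.
Qed.

Lemma rel_at U h J p : open2 U -> almost_norden2 U h J -> U (p 1%nat) (p 2%nat) ->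
  Rel (Hf h p) (Jf J p) (dHf h p) (dJf J p).
Proof.
intros HO AN Hu.
destruct (pointwise U h J _ _ AN Hu) as [q1 [q2 [q3 [q4 q5]]]].
destruct (loc_of_open U _ _ HO Hu) as [L1 L2].
destruct (AN _ _ Hu) as [Hex _].
unfold Rel. split; [unfold Jf; lra|]. split; [unfold Jf; lra|].
split; [unfold Hf; lra|]. split; [unfold Hf, Jf; lra|]. split; [exact q5|].
intros k Hk. destruct k as [|[|k]]; [| | lia].
- apply (drel (fun a b s => h a b s (p 2%nat)) (fun a b s => J a b s (p 2%nat)) (p 1%nat)).
  + eapply filter_imp; [|exact L1]. intros s Us. exact (pointwise U h J _ _ AN Us).
  + intros a b Ha Hb. destruct (Hex a b Ha Hb) as [e1 [e2 [e3 e4]]]. split; assumption.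
- apply (drel (fun a b s => h a b (p 1%nat) s) (fun a b s => J a b (p 1%nat) s) (p 2%nat)).
  + eapply filter_imp; [|exact L2]. intros s Us. exact (pointwise U h J _ _ AN Us).
  + intros a b Ha Hb. destruct (Hex a b Ha Hb) as [e1 [e2 [e3 e4]]]. split; assumption.
Qed.

Section C5.
Variables (h J : nat -> nat -> R -> R -> R).
Definition HJ p (x y : nat -> R) := sumn 2 (fun a => sumn 2 (fun c => sumn 2 (fun b =>
   x (S a) * Hf h p a c * Jf J p c b * y (S b)))).
Definition HJx p (x z : nat -> R) := sumn 2 (fun a => sumn 2 (fun c => sumn 2 (fun d =>
   x (S a) * Jf J p c a * Hf h p c d * z (S d)))).
Definition AS p (x y z : nat -> R) := sumn 2 (fun a => sumn 2 (fun b => sumn 2 (fun d =>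
   x (S a) * y (S b) * z (S d) * Ac (Hf h p) (Jf J p) (dHf h p) (dJf J p) a b d))).
Definition FcC p x y z := - p 0%nat * (z 0%nat * HJ p x y + y 0%nat * HJx p x z) + p 0%nat ^ 2 * AS p x y z.

Lemma Fc_closed p x y z : p 0%nat <> 0 -> dtH (Hf h p) <> 0 -> Hf h p 1%nat 0%nat = Hf h p 0%nat 1%nat ->
  Fc h J x y z p = FcC p x y z.
Proof.
intros Hp Hd Hs. unfold Fc, g3, g3inv, phi3. cbn [sumn].
rewrite !covD_cone by (try lia; auto).
cbv beta iota delta [CovC FcC HJ HJx AS Ac sumn gC Hf Jf].
field. auto.
Qed.
End C5.

Lemma Ac_struct' H Jm dH dJ : Rel H Jm dH dJ -> forall a b d, (a < 2)%nat -> (b < 2)%nat -> (d < 2)%nat ->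
  Ac H Jm dH dJ a b d = Ac H Jm dH dJ a 0%nat 0%nat * Pm Jm b d / Jm 1%nat 0%nat.
Proof.
intros R a b d Ha Hb Hd. assert (E := Ac_struct H Jm dH dJ R a b d Ha Hb Hd).
destruct R as [r1 _].
assert (nz : Jm 1%nat 0%nat <> 0) by (intro Z; rewrite Z in r1; nra).
rewrite <- E. field. auto.
Qed.

Section C6.
Variables (h J : nat -> nat -> R -> R -> R).

Lemma part1_pt p x y z : Rel (Hf h p) (Jf J p) (dHf h p) (dJf J p) -> 0 < p 0%nat ->
  Fc h J x y z p = F1rhs h J x y z p + F5rhs h J x y z p.
Proof.
intros R Hp.
assert (Hp' : p 0%nat <> 0) by lra.
assert (AcS := Ac_struct' _ _ _ _ R).
destruct R as [r1 [r2 [r3 [r4 [r5 _]]]]].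
unfold F1rhs, F5rhs, theta, theta_s, gv, g3, g3inv, phi3.
cbn [sumn].
rewrite !Fc_closed by auto.
rewrite !inv3_gC by (try lia; auto).
cbv beta iota delta [FcC HJ HJx AS GI phiv phi3 phiC gC eta xi basis delta sumn Nat.eqb Hi dtH].
rewrite (AcS 0%nat 0%nat 1%nat), (AcS 0%nat 1%nat 0%nat), (AcS 0%nat 1%nat 1%nat), (AcS 1%nat 0%nat 1%nat), (AcS 1%nat 1%nat 0%nat), (AcS 1%nat 1%nat 1%nat) by lia.
set (al0 := Ac (Hf h p) (Jf J p) (dHf h p) (dJf J p) 0%nat 0%nat 0%nat).
set (al1 := Ac (Hf h p) (Jf J p) (dHf h p) (dJf J p) 1%nat 0%nat 0%nat).
cbv beta iota delta [Pm].
unfold dtH in r5. unfold Hf, Jf in *.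
assert (J01nz : J 0%nat 1%nat (p 1%nat) (p 2%nat) <> 0) by (intro Z; rewrite Z in r1; nra).
rewrite r3 in r4, r5. rewrite r2 in r4.
rewrite ?r2, ?r3.
clearbody al0 al1. clear AcS.
set (a := J 0%nat 0%nat (p 1%nat) (p 2%nat)) in *.
set (b := J 0%nat 1%nat (p 1%nat) (p 2%nat)) in *.
set (c := J 1%nat 0%nat (p 1%nat) (p 2%nat)) in *.
set (h00 := h 0%nat 0%nat (p 1%nat) (p 2%nat)) in *.
set (h01 := h 0%nat 1%nat (p 1%nat) (p 2%nat)) in *.
set (h11 := h 1%nat 1%nat (p 1%nat) (p 2%nat)) in *.
set (t := p 0%nat) in *.
clearbody a b c h00 h01 h11 t.
assert (ec : c = -(1 + a*a)/b).
{ apply (Rmult_eq_reg_r b); [| auto]. unfold Rdiv.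
  rewrite Rmult_assoc, Rinv_l; [nra | auto]. }
assert (eh : h00 = (2*a*h01 + h11*c)/b).
{ apply (Rmult_eq_reg_r b); [| auto]. unfold Rdiv.
  rewrite Rmult_assoc, Rinv_l; [nra | auto]. }
subst h00. subst c.
assert (r5' : (2 * a * h01 * b + h11 * - (1 + a * a)) * h11 - h01 * h01 * (b * b) <> 0).
{ intro Z; apply r5.
  replace 0 with (0 / (b * b)) by (field; auto).
  rewrite <- Z. field. auto. }
field. split; [auto|]. split; [nra|]. split; auto.
Qed.
End C6.

Ltac cases2 i := let H := fresh in assert (H : (i = 0 \/ i = 1)%nat) by lia;
  destruct H as [H|H]; subst i.

Section C7.
Variables (h J : nat -> nat -> R -> R -> R).

Lemma N_covD p i k j : (i < 2)%nat -> (k < 2)%nat -> (j < 2)%nat ->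
  covD 2 (hN h) (inv2 (hN h)) (hN J) i k j (fun m => p (S m)) =
  cov (Hf h p) (Jf J p) (dHf h p) (dJf J p) i k j.
Proof.
intros Hi0 Hk Hj. cases2 i; cases2 k; cases2 j; reflexivity.
Qed.

Lemma cov_zero H Jm dH dJ : dtH H <> 0 ->
  (forall a b d, (a < 2)%nat -> (b < 2)%nat -> (d < 2)%nat -> Ac H Jm dH dJ a b d = 0) ->
  forall i k j, (i < 2)%nat -> (k < 2)%nat -> (j < 2)%nat -> cov H Jm dH dJ i k j = 0.
Proof.
intros Hd A0 i k j Hi0 Hk Hj.
assert (E0 : dtH H * cov H Jm dH dJ i 0%nat j = H 1%nat 1%nat * Ac H Jm dH dJ i j 0%nat - H 1%nat 0%nat * Ac H Jm dH dJ i j 1%nat)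
  by (unfold dtH, Ac; simpl sumn; ring).
assert (E1 : dtH H * cov H Jm dH dJ i 1%nat j = H 0%nat 0%nat * Ac H Jm dH dJ i j 1%nat - H 0%nat 1%nat * Ac H Jm dH dJ i j 0%nat)
  by (unfold dtH, Ac; simpl sumn; ring).
rewrite !A0 in E0, E1 by lia.
cases2 k.
- apply (Rmult_eq_reg_l (dtH H)); [|auto]. rewrite E0; ring.
- apply (Rmult_eq_reg_l (dtH H)); [|auto]. rewrite E1; ring.
Qed.

Lemma Fc_basis p a b d : (a < 2)%nat -> (b < 2)%nat -> (d < 2)%nat ->
  p 0%nat <> 0 -> dtH (Hf h p) <> 0 -> Hf h p 1%nat 0%nat = Hf h p 0%nat 1%nat ->
  Fc h J (basis (S a)) (basis (S b)) (basis (S d)) p = p 0%nat ^ 2 * Ac (Hf h p) (Jf J p) (dHf h p) (dJf J p) a b d.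
Proof.
intros Ha Hb Hd Hp Hdt Hs. rewrite Fc_closed by auto.
cases2 a; cases2 b; cases2 d;
cbv beta iota delta [FcC HJ HJx AS basis delta sumn Nat.eqb]; ring.
Qed.

Lemma F5_basis p a b d :
  F5rhs h J (basis (S a)) (basis (S b)) (basis (S d)) p = 0.
Proof.
unfold F5rhs. cbv beta iota delta [eta basis delta Nat.eqb]. ring.
Qed.

Lemma F1_zero p x y z : p 0%nat <> 0 -> dtH (Hf h p) <> 0 -> Hf h p 1%nat 0%nat = Hf h p 0%nat 1%nat ->
  (forall a b d, (a < 2)%nat -> (b < 2)%nat -> (d < 2)%nat -> Ac (Hf h p) (Jf J p) (dHf h p) (dJf J p) a b d = 0) ->
  F1rhs h J x y z p = 0.
Proof.
intros Hp Hdt Hs A0.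
unfold F1rhs, theta, g3inv. cbn [sumn].
rewrite !Fc_closed by auto.
rewrite !inv3_gC by (try lia; auto).
cbv beta iota delta [FcC HJ HJx AS GI phiv phi3 phiC basis delta sumn Nat.eqb].
rewrite !A0 by lia. ring.
Qed.

Lemma xi_case p a b : (a < 2)%nat -> (b < 2)%nat -> p 0%nat <> 0 -> dtH (Hf h p) <> 0 -> Hf h p 1%nat 0%nat = Hf h p 0%nat 1%nat ->
  Fc h J (basis (S a)) (basis (S b)) xi p - F1rhs h J (basis (S a)) (basis (S b)) xi p
  = - p 0%nat * sumn 2 (fun c => Hf h p a c * Jf J p c b).
Proof.
intros Ha Hb Hp Hdt Hs.
unfold F1rhs, theta, gv, g3, g3inv. cbn [sumn].
rewrite !Fc_closed by auto.
rewrite !inv3_gC by (try lia; auto).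
cbv beta iota delta [FcC HJ HJx AS GI phiv phi3 phiC xi basis delta sumn Nat.eqb].
cases2 a; cases2 b; unfold Hf, Jf; cbn [sumn]; ring.
Qed.
End C7.

Theorem theorem3p3 (U : R -> R -> Prop) (h J : nat -> nat -> R -> R -> R) :
  open2 U -> (exists u1 u2, U u1 u2) -> almost_norden2 U h J ->
  cone_in_F1F5 U h J /\
  (cone_in_F5 U h J <-> kahler_norden U h J) /\
  ~ cone_in_F1 U h J.
Proof.
intros HO [u1 [u2 Hu]] AN.
split; [|split; [split|]].
- intros p [Hp Hu'] x y z. apply part1_pt; [apply (rel_at U); auto | auto].
- intros F5 q Hq i k j Hi Hk Hj.
  set (p := fun n => match n with 0%nat => 1 | S m => q m end).
  assert (cp : cone_point U p) by (split; [unfold p; lra | exact Hq]).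
  assert (R := rel_at U h J p HO AN Hq).
  destruct R as [r1 [r2 [r3 [r4 [r5 _]]]]].
  change q with (fun m => p (S m)).
  rewrite N_covD by auto.
  apply cov_zero; auto.
  intros a b d Ha Hb Hd.
  assert (E := F5 p cp (basis (S a)) (basis (S b)) (basis (S d))).
  rewrite F5_basis, Fc_basis in E by first [assumption | (unfold p; simpl; lra)].
  replace (p 0%nat) with 1 in E by reflexivity. rewrite pow1, Rmult_1_l in E. exact E.
- intros K p [Hp Hu'] x y z.
  assert (R := rel_at U h J p HO AN Hu').
  assert (R' := R). destruct R' as [r1 [r2 [r3 [r4 [r5 _]]]]].
  assert (A0 : forall a b d, (a < 2)%nat -> (b < 2)%nat -> (d < 2)%nat ->
     Ac (Hf h p) (Jf J p) (dHf h p) (dJf J p) a b d = 0).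
  { intros a b d Ha Hb Hd.
    assert (C : forall k, (k < 2)%nat -> cov (Hf h p) (Jf J p) (dHf h p) (dJf J p) a k b = 0).
    { intros k Hk. rewrite <- N_covD by auto. apply K; auto. }
    unfold Ac. simpl sumn. rewrite !C by lia. ring. }
  rewrite part1_pt by (auto; lra).
  rewrite F1_zero by (auto; lra). ring.
- intro F1.
  set (p := fun n => match n with 0%nat => 1 | 1%nat => u1 | _ => u2 end).
  assert (cp : cone_point U p) by (split; [unfold p; lra | exact Hu]).
  assert (R := rel_at U h J p HO AN Hu).
  destruct R as [r1 [r2 [r3 [r4 [r5 _]]]]].
  assert (E : forall a b, (a < 2)%nat -> (b < 2)%nat -> sumn 2 (fun c => Hf h p a c * Jf J p c b) = 0).
  { intros a b Ha Hb.
    assert (X := xi_case h J p a b Ha Hb ltac:(unfold p; simpl; lra) r5 r3).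
    rewrite (F1 p cp) in X. replace (p 0%nat) with 1 in X by reflexivity. lra. }
  assert (e00 := E 0%nat 0%nat ltac:(lia) ltac:(lia)).
  assert (e01 := E 0%nat 1%nat ltac:(lia) ltac:(lia)).
  assert (e10 := E 1%nat 0%nat ltac:(lia) ltac:(lia)).
  assert (e11 := E 1%nat 1%nat ltac:(lia) ltac:(lia)).
  simpl sumn in e00, e01, e10, e11.
  unfold dtH in r5. apply r5.
  assert (D : (0 + Hf h p 0%nat 0%nat * Jf J p 0%nat 0%nat + Hf h p 0%nat 1%nat * Jf J p 1%nat 0%nat) *
              (0 + Hf h p 1%nat 0%nat * Jf J p 0%nat 1%nat + Hf h p 1%nat 1%nat * Jf J p 1%nat 1%nat) -
              (0 + Hf h p 0%nat 0%nat * Jf J p 0%nat 1%nat + Hf h p 0%nat 1%nat * Jf J p 1%nat 1%nat) *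
              (0 + Hf h p 1%nat 0%nat * Jf J p 0%nat 0%nat + Hf h p 1%nat 1%nat * Jf J p 1%nat 0%nat)
            = (Hf h p 0%nat 0%nat * Hf h p 1%nat 1%nat - Hf h p 0%nat 1%nat * Hf h p 1%nat 0%nat) *
              (Jf J p 0%nat 0%nat * Jf J p 1%nat 1%nat - Jf J p 0%nat 1%nat * Jf J p 1%nat 0%nat)) by ring.
  rewrite e00, e01, e10, e11 in D. rewrite r2 in D.
  replace (Jf J p 0%nat 0%nat * - Jf J p 0%nat 0%nat - Jf J p 0%nat 1%nat * Jf J p 1%nat 0%nat) with 1 in D by lra.
  lra.
Qed.
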